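(* Let $N\ge 1$, let $\boldsymbol{\theta}_1,\dots,\boldsymbol{\theta}_N\in\mathbb{R}^d$, and let $\boldsymbol{C}\in\mathbb{R}^{N\times N}$ be the squared Euclidean distance matrix $\boldsymbol{C}(r,s)=\|\boldsymbol{\theta}_r-\boldsymbol{\theta}_s\|_2^2$. Fix $\varepsilon>0$, $\alpha>0$, $\boldsymbol{a}\in\mathbb{R}^N\setminus\{\boldsymbol{0}\}$ and $\boldsymbol{\zeta}\in\Delta^{N-1}$. Let $\boldsymbol{\Phi}(\boldsymbol{\mu}):=\langle \boldsymbol{a},\boldsymbol{\mu}\rangle$ for $\boldsymbol{\mu}\in\Delta^{N-1}$, and let $\boldsymbol{\Gamma}:=\exp(-\boldsymbol{C}/(2\varepsilon))$ (entrywise exponential). Then the entropy-regularized Wasserstein proximal operator $$\mathrm{prox}^{W_\varepsilon}_{\frac{1}{\alpha}\boldsymbol{\Phi}}(\boldsymbol{\zeta}) := \underset{\boldsymbol{\mu}\in\Delta^{N-1}}{\arg\inf}\left\{\min_{\boldsymbol{M}\in\Pi_N(\boldsymbol{\mu},\boldsymbol{\zeta})}\left\langle \tfrac12\boldsymbol{C}+\varepsilon\log\boldsymbol{M},\,\boldsymbol{M}\right\rangle+\frac{1}{\alpha}\boldsymbol{\Phi}(\boldsymbol{\mu})\right\}$$ is given by $$\mathrm{prox}^{W_\varepsilon}_{\frac{1}{\alpha}\boldsymbol{\Phi}}(\boldsymbol{\zeta}) = \exp\!\left(-\tfrac{1}{\alpha\varepsilon}\boldsymbol{a}\right)\odot\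left(\boldsymbol{\Gamma}^{\top}\left(\boldsymbol{\zeta}\oslash\left(\boldsymbol{\Gamma}\exp\!\left(-\tfrac{1}{\alpha\varepsilon}\boldsymbol{a}\right)\right)\right)\right).$$
   Context: $\Delta^{N-1}:=\{\boldsymbol{x}\in\mathbb{R}^N:\boldsymbol{x}\ge\boldsymbol{0},\ \boldsymbol{1}^\top\boldsymbol{x}=1\}$ is the probability simplex. For $\boldsymbol{\xi},\boldsymbol{\eta}\in\Delta^{N-1}$, $\Pi_N(\boldsymbol{\xi},\boldsymbol{\eta}):=\{\boldsymbol{M}\in\mathbb{R}^{N\times N}: \boldsymbol{M}\ge\boldsymbol{0}\text{ entrywise},\ \boldsymbol{M}\boldsymbol{1}=\boldsymbol{\xi},\ \boldsymbol{M}^\top\boldsymbol{1}=\boldsymbol{\eta}\}$, where $\boldsymbol{1}$ is the all-ones vector. For matrices, $\langle \boldsymbol{A},\boldsymbol{B}\rangle=\sum_{r,s}\boldsymbol{A}(r,s)\boldsymbol{B}(r,s)$; $\log\boldsymbol{M}$ and $\exp(\cdot)$ act entrywise, with the convention $0\log 0=0$. The symbols $\odot$ and $\oslash$ denote entrywise (Hadamard) multiplication and division of vectors. *)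

(* Defs.v *)
From HB Require Import structures.
From mathcomp Require Import all_boot all_order all_algebra.
From mathcomp Require Import all_classical all_reals all_analysis.
Set Implicit Arguments. Unset Strict Implicit. Unset Printing Implicit Defensive.
Import Order.TTheory GRing.Theory Num.Theory.
Local Open Scope classical_set_scope.
Local Open Scope ring_scope.

Definition simplex (R : realType) (N : nat) : set ('I_N -> R) :=
  [set x | (forall i, 0 <= x i) /\ \sum_(i < N) x i = 1].

Definition couplings (R : realType) (N : nat) (xi eta : 'I_N -> R)
  : set 'M[R]_N :=
  [set M | (forall r s, 0 <= M r s)
         /\ (forall r, \sum_(s < N) M r s = xi r)
         /\ (forall s, \sum_(r < N) M r s = eta s)].

Definition xlogx (R : realType) (x : R) : R := if x == 0 then 0 else x * ln x.

Definition sqdist_mx (R : realType) (N d : nat) (theta : 'I_N -> 'I_d -> R)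
  : 'M[R]_N :=
  \matrix_(r, s) \sum_(k < d) (theta r k - theta s k) ^+ 2.

Definition ent_cost (R : realType) (N : nat) (C : 'M[R]_N) (eps : R)
  (M : 'M[R]_N) : R :=
  \sum_(r < N) \sum_(s < N) (C r s / 2 * M r s + eps * xlogx (M r s)).

(* min_{M in Pi(mu,zeta)} <C/2 + eps log M, M>  (the infimum, attained) *)
Definition ent_ot (R : realType) (N : nat) (C : 'M[R]_N) (eps : R)
  (mu zeta : 'I_N -> R) : R :=
  inf [set ent_cost C eps M | M in couplings mu zeta].

Definition prox_obj (R : realType) (N : nat) (C : 'M[R]_N) (eps alpha : R)
  (Phi : ('I_N -> R) -> R) (zeta mu : 'I_N -> R) : R :=
  ent_ot C eps mu zeta + alpha^-1 * Phi mu.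

Definition prox_argmin (R : realType) (N : nat) (C : 'M[R]_N) (eps alpha : R)
  (Phi : ('I_N -> R) -> R) (zeta : 'I_N -> R) : set ('I_N -> R) :=
  [set mu | simplex mu /\
     forall nu, simplex nu ->
       prox_obj C eps alpha Phi zeta mu <= prox_obj C eps alpha Phi zeta nu].

Definition prox_formula (R : realType) (N : nat) (C : 'M[R]_N) (eps alpha : R)
  (a zeta : 'I_N -> R) : 'I_N -> R :=
  let Gamma := \matrix_(r, s) expR (- C r s / (2 * eps)) in
  let w := fun i => expR (- (alpha * eps)^-1 * a i) in
  let Gw := fun r => \sum_(s < N) Gamma r s * w s in
  fun s => w s * \sum_(r < N) Gamma r s * (zeta r / Gw r).

(* Main.v *)
Require Import Defs.
From HB Require Import structures.
From mathcomp Require Import all_boot all_order all_algebra.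
From mathcomp Require Import all_classical all_reals all_analysis.
From mathcomp Require Import ring lra.
Import Order.TTheory GRing.Theory Num.Theory.
Local Open Scope classical_set_scope.
Local Open Scope ring_scope.

Section Scalar.
Variable R : realType.

Lemma xlogxE (x : R) : xlogx x = x * ln x.
Proof. by rewrite /xlogx; case: eqP => [->|]; rewrite ?mul0r. Qed.

Lemma ln_le_sub1 (z : R) : 0 < z -> ln z <= z - 1.
Proof.
move=> z0; have := expR_ge1Dx (ln z); rewrite lnK ?posrE //; lra.
Qed.

Lemma ln_lt_sub1 (z : R) : 0 < z -> z != 1 -> ln z < z - 1.
Proof.
move=> z0 z1; have := @expR_gt1Dx R (ln z); rewrite lnK ?posrE //.
by rewrite ln_eq0 // z1 => /(_ isT); lra.
Qed.

Lemma xlogx_lb (m y L : R) : 0 <= m -> 0 <= y ->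
  (0 < m -> 0 < y /\ ln y = L) -> m * L + m - y <= xlogx m.
Proof.
move=> m0 y0 H; rewrite xlogxE.
have [->|mpos] := eqVneq m 0; first by rewrite !mul0r; lra.
have mp : 0 < m by rewrite lt0r mpos.
have [yp <-] := H mp.
have := ln_le_sub1 _ (divr_gt0 yp mp); rewrite ln_div ?posrE // => Hl.
have := ler_wpM2l m0 Hl.
have -> : m * (y / m - 1) = y - m by field; rewrite gt_eqF.
nra.
Qed.

Lemma kl_term_ge0 (x y : R) : 0 <= x -> 0 < y ->
  0 <= x * (ln x - ln y) - x + y.
Proof.
move=> x0 yp; have [->|xn] := eqVneq x 0; first by rewrite !mul0r; lra.
have xp : 0 < x by rewrite lt0r xn.
have := ln_le_sub1 _ (divr_gt0 yp xp); rewrite ln_div ?posrE // => Hl.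
have := ler_wpM2l x0 Hl.
have -> : x * (y / x - 1) = y - x by field; rewrite gt_eqF.
nra.
Qed.

Lemma kl_term_eq0 (x y : R) : 0 <= x -> 0 < y ->
  x * (ln x - ln y) - x + y = 0 -> x = y.
Proof.
move=> x0 yp; have [->|xn] := eqVneq x 0; first by rewrite !mul0r; lra.
have xp : 0 < x by rewrite lt0r xn.
have [e|ne] := eqVneq (y / x) 1.
  by move=> _; move: e; rewrite -[X in _ = X -> _](divff xn) => /(mulIf (invr_neq0 xn)).
have := ln_lt_sub1 _ (divr_gt0 yp xp) ne; rewrite ln_div ?posrE // => Hl.
have key : x * (y / x - 1) = y - x by field; rewrite gt_eqF.
move: Hl; rewrite -(ltr_pM2l xp) key => Hl2.
nra.
Qed.

Lemma lnMp (x y : R) : 0 < x -> 0 < y -> ln (x * y) = ln x + ln y.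
Proof. by move=> *; rewrite lnM ?posrE. Qed.

Lemma lndivp (x y : R) : 0 < x -> 0 < y -> ln (x / y) = ln x - ln y.
Proof. by move=> *; rewrite ln_div ?posrE. Qed.

Lemma term_le_sum (N : nat) (F : 'I_N -> R) (i : 'I_N) :
  (forall j, 0 <= F j) -> F i <= \sum_(j < N) F j.
Proof.
move=> F0; rewrite (bigD1 i) //= lerDl; exact: sumr_ge0.
Qed.

End Scalar.
Arguments lnMp {R x y}.
Arguments lndivp {R x y}.
Arguments kl_term_ge0 {R x y}.
Arguments kl_term_eq0 {R x y}.

Theorem theorem1 (R : realType) (N d : nat) (theta : 'I_N -> 'I_d -> R)
  (eps alpha : R) (a zeta : 'I_N -> R) :
  (0 < N)%N -> 0 < eps -> 0 < alpha -> (exists i, a i != 0) ->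
  simplex zeta ->
  prox_argmin (sqdist_mx theta) eps alpha
    (fun mu => \sum_(i < N) a i * mu i) zeta
  = [set prox_formula (sqdist_mx theta) eps alpha a zeta].
Proof.
move=> N0 eps0 al0 _ [zeta0 zeta1].
set C := sqdist_mx theta.
have CS : forall x y, C y x = C x y.
  by move=> x y; rewrite /C !mxE; apply: eq_bigr => k _; rewrite -sqrrN opprB.
pose G (y x : 'I_N) := expR (- C y x / (2 * eps)).
pose w (x : 'I_N) := expR (- (alpha * eps)^-1 * a x).
pose Gw (y : 'I_N) := \sum_(s < N) G y s * w s.
pose mu (x : 'I_N) := w x * \sum_(r < N) G r x * (zeta r / Gw r).
have muE : prox_formula C eps alpha a zeta = mu.
  apply/funext => s; rewrite /prox_formula /mu /Gw /=; congr (_ * _).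
  apply: eq_bigr => r _; rewrite mxE; congr (_ * (_ / _)).
  by apply: eq_bigr => t _; rewrite mxE.
have Gp x y : 0 < G x y by exact: expR_gt0.
have wp x : 0 < w x by exact: expR_gt0.
have Gwp y : 0 < Gw y.
  have ge : 0 <= Gw y by apply: sumr_ge0 => s _; rewrite mulr_ge0 // ltW.
  rewrite lt0r ge andbT; apply/eqP => H0.
  have := @psumr_eq0P _ _ xpredT (fun s => G y s * w s)
    (fun s _ => mulr_ge0 (ltW (Gp y s)) (ltW (wp s))) H0 y isT.
  by move=> /eqP; rewrite mulf_eq0 !gt_eqF.
have mup x : 0 < mu x.
  have ge : 0 <= \sum_(r < N) G r x * (zeta r / Gw r).
    by apply: sumr_ge0 => r _; rewrite mulr_ge0 ?divr_ge0 // ltW.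
  rewrite /mu mulr_gt0 // lt0r ge andbT; apply/eqP => H0.
  have Z r : zeta r = 0.
    have := @psumr_eq0P _ _ xpredT (fun r => G r x * (zeta r / Gw r))
      (fun r _ => mulr_ge0 (ltW (Gp r x)) (divr_ge0 (zeta0 r) (ltW (Gwp r)))) H0 r isT.
    move=> /eqP; rewrite mulf_eq0 gt_eqF //= mulf_eq0 invr_eq0 (gt_eqF (Gwp r)) orbF.
    by move/eqP.
  by move: zeta1; rewrite big1 // => /eqP; rewrite eq_sym oner_eq0.
pose Mst (x y : 'I_N) := w x * (G y x * (zeta y / Gw y)).
have Mst0 x y : 0 <= Mst x y.
  rewrite /Mst; apply: mulr_ge0; first exact: ltW.
  apply: mulr_ge0; first exact: ltW.
  by apply: divr_ge0 => //; exact: ltW.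
have Mrow x : \sum_(y < N) Mst x y = mu x by rewrite /mu mulr_sumr.
have Mcol y : \sum_(x < N) Mst x y = zeta y.
  rewrite (eq_bigr (fun x => G y x * w x * (zeta y / Gw y))); last first.
    by move=> x _; rewrite /Mst; ring.
  rewrite -mulr_suml -/(Gw y); field; by rewrite gt_eqF.
pose Lz (y : 'I_N) := ln (zeta y) - ln (Gw y).
pose V0 := \sum_(y < N) zeta y * Lz y.
pose A (nu : 'I_N -> R) := \sum_(x < N) a x * nu x.
pose Dn (nu : 'I_N -> R) := \sum_(x < N) nu x * (ln (nu x) - ln (mu x)).
have SUMQ (nu : 'I_N -> R) (F : 'I_N -> 'I_N -> R) :
    (forall r, \sum_(s < N) F r s = nu r) ->
    (forall s, \sum_(r < N) F r s = zeta s) ->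
    \sum_(x < N) \sum_(y < N) (-(a x / alpha) * F x y + eps * (F x y * Lz y))
    = -(alpha^-1 * A nu) + eps * V0.
  move=> Fr Fc.
  rewrite (eq_bigr (fun x => -(a x / alpha) * nu x + eps * \sum_(y < N) F x y * Lz y)); last first.
    by move=> x _; rewrite big_split /= -!mulr_sumr Fr.
  rewrite big_split /=; congr (_ + _).
    rewrite /A mulr_sumr -sumrN; apply: eq_bigr => x _; field.
    by rewrite gt_eqF.
  rewrite -mulr_sumr exchange_big /=; congr (_ * _); apply: eq_bigr => y _.
  by rewrite -mulr_suml Fc.
have LB (nu : 'I_N -> R) (M : 'M[R]_N) : couplings nu zeta M ->
    -(alpha^-1 * A nu) + eps * V0 + eps * Dn nu <= ent_cost C eps M.
  move=> [M0 [Mr Mc]].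
  have nu0 x : 0 <= nu x by rewrite -Mr; apply: sumr_ge0.
  have Mpos x y : 0 < M x y -> 0 < zeta y /\ 0 < nu x.
    move=> h; split; [rewrite -Mc | rewrite -Mr]; apply: lt_le_trans h _.
      exact: (@term_le_sum _ _ (fun r => M r y) x (fun r => M0 r y)).
    exact: (@term_le_sum _ _ (fun s => M x s) y (fun s => M0 x s)).
  have Hpt x y : -(a x / alpha) * M x y + eps * (M x y * Lz y)
      + (eps * (M x y * (ln (nu x) - ln (mu x)))
         + eps * (M x y - Mst x y * (nu x / mu x)))
      <= C x y / 2 * M x y + eps * xlogx (M x y).
    pose L := -(alpha * eps)^-1 * a x + - C y x / (2 * eps) + Lz y
              + (ln (nu x) - ln (mu x)).
    have H := @xlogx_lb _ (M x y) (Mst x y * (nu x / mu x)) L (M0 x y)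
      (mulr_ge0 (Mst0 x y) (divr_ge0 (nu0 x) (ltW (mup x)))).
    have {H} H : M x y * L + M x y - Mst x y * (nu x / mu x) <= xlogx (M x y).
      apply: H => /Mpos [zp np].
      have Mp : 0 < Mst x y.
        by rewrite /Mst mulr_gt0 // mulr_gt0 // divr_gt0.
      split; first by apply: mulr_gt0 Mp (divr_gt0 np (mup x)).
      rewrite (lnMp Mp (divr_gt0 np (mup x))) /Mst.
      rewrite (lnMp (wp x) (mulr_gt0 (Gp y x) (divr_gt0 zp (Gwp y)))).
      rewrite (lnMp (Gp y x) (divr_gt0 zp (Gwp y))) (lndivp zp (Gwp y)).
      rewrite (lndivp np (mup x)) /w /G !expRK /L /Lz; ring.
    have E : -(a x / alpha) * M x y + eps * (M x y * Lz y)
      + (eps * (M x y * (ln (nu x) - ln (mu x)))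
         + eps * (M x y - Mst x y * (nu x / mu x)))
      = C x y / 2 * M x y + eps * (M x y * L + M x y - Mst x y * (nu x / mu x)).
      rewrite /L CS; field.
      by rewrite (gt_eqF (mup x)) (gt_eqF eps0) (gt_eqF al0).
    by rewrite E lerD2l ler_wpM2l // ltW.
  rewrite /ent_cost.
  apply: le_trans (ler_sum _ (fun x _ => ler_sum _ (fun y _ => Hpt x y))).
  rewrite le_eqVlt; apply/orP; left; apply/eqP.
  rewrite (eq_bigr (fun x => \sum_(y < N) (-(a x / alpha) * M x y + eps * (M x y * Lz y))
     + eps * (nu x * (ln (nu x) - ln (mu x))))); last first.
    move=> x _; rewrite big_split /=; congr (_ + _).
    rewrite big_split /= -!mulr_sumr -mulr_suml Mr sumrB -mulr_suml Mr Mrow.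
    have -> : mu x * (nu x / mu x) = nu x by field; rewrite gt_eqF.
    by rewrite subrr mulr0 addr0.
  by rewrite big_split /= (SUMQ nu (fun x y => M x y) Mr Mc) -mulr_sumr.
have cpl nu : simplex nu -> couplings nu zeta (\matrix_(x, y) (nu x * zeta y)).
  move=> [nu0 nu1]; split; [|split].
  - by move=> r s; rewrite mxE mulr_ge0.
  - by move=> r; under eq_bigr do rewrite mxE; rewrite -mulr_sumr zeta1 mulr1.
  - by move=> s; under eq_bigr do rewrite mxE; rewrite -mulr_suml nu1 mul1r.
have hlb nu : has_lbound [set ent_cost C eps M | M in couplings nu zeta].
  by exists (-(alpha^-1 * A nu) + eps * V0 + eps * Dn nu) => _ [M HM <-]; exact: LB.
have lbS nu : simplex nu ->
    -(alpha^-1 * A nu) + eps * V0 + eps * Dn nu <= ent_ot C eps nu zeta.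
  move=> hs; apply: lb_le_inf.
    by exists (ent_cost C eps (\matrix_(x, y) (nu x * zeta y))); exists (\matrix_(x, y) (nu x * zeta y)) => //; exact: cpl.
  by move=> _ [M HM <-]; exact: LB.
pose Mstm := \matrix_(x, y) Mst x y.
have MstmE x y : Mstm x y = Mst x y by rewrite /Mstm mxE.
have cplM : couplings mu zeta Mstm.
  split; [|split].
  - by move=> r s; rewrite mxE.
  - by move=> r; under eq_bigr do rewrite mxE; exact: Mrow.
  - by move=> s; under eq_bigr do rewrite mxE; exact: Mcol.
have costM : ent_cost C eps Mstm = -(alpha^-1 * A mu) + eps * V0.
  rewrite /ent_cost -(SUMQ mu Mst Mrow Mcol); apply: eq_bigr => x _.
  apply: eq_bigr => y _; rewrite MstmE.
  have [z0|zn] := eqVneq (zeta y) 0.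
    have -> : Mst x y = 0 by rewrite /Mst z0 mul0r !mulr0.
    by rewrite xlogxE; ring.
  have zp : 0 < zeta y by rewrite lt0r zn zeta0.
  rewrite xlogxE /Mst (lnMp (wp x) (mulr_gt0 (Gp y x) (divr_gt0 zp (Gwp y)))).
  rewrite (lnMp (Gp y x) (divr_gt0 zp (Gwp y))) (lndivp zp (Gwp y)) /w /G !expRK /Lz CS.
  field.
  by rewrite (gt_eqF (Gwp y)) (gt_eqF eps0) (gt_eqF al0).
have mus : simplex mu.
  split; first by move=> x; apply: ltW.
  rewrite (eq_bigr (fun x => \sum_(y < N) Mst x y)); last by move=> x _; rewrite Mrow.
  rewrite exchange_big /=.
  by under eq_bigr do rewrite Mcol.
have valmu : prox_obj C eps alpha (fun mu0 => \sum_(i < N) a i * mu0 i) zeta mu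
    <= eps * V0.
  rewrite /prox_obj /= -/(A mu).
  have : ent_ot C eps mu zeta <= ent_cost C eps Mstm.
    by rewrite /ent_ot; apply: (ge_inf (hlb mu)); exists Mstm.
  rewrite costM; lra.
have lownu nu : simplex nu -> eps * V0 + eps * Dn nu <=
    prox_obj C eps alpha (fun mu0 => \sum_(i < N) a i * mu0 i) zeta nu.
  move=> hs; rewrite /prox_obj /= -/(A nu).
  have := lbS nu hs; lra.
have Dd nu : simplex nu ->
    Dn nu = \sum_(x < N) (nu x * (ln (nu x) - ln (mu x)) - nu x + mu x).
  move=> [_ nu1]; rewrite big_split sumrB /= nu1 mus.2 subrK //.
have Dge0 nu : simplex nu -> 0 <= Dn nu.
  move=> hs; rewrite (Dd nu hs); apply: sumr_ge0 => x _.
  exact: kl_term_ge0 (hs.1 x) (mup x).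
have Deq nu : simplex nu -> Dn nu <= 0 -> nu = mu.
  move=> hs Hle.
  have H0 : \sum_(x < N) (nu x * (ln (nu x) - ln (mu x)) - nu x + mu x) = 0.
    by apply: le_anti; rewrite -(Dd nu hs) Hle Dge0.
  apply/funext => x; apply: kl_term_eq0 (hs.1 x) (mup x) _.
  exact: (psumr_eq0P (fun i _ => kl_term_ge0 (hs.1 i) (mup i)) H0 (i := x) isT).
rewrite muE; apply/seteqP; split.
  move=> nu [hs Hmin]; rewrite /=; apply: (Deq _ hs).
  have h1 := Hmin mu mus; have h2 := lownu nu hs.
  have : eps * Dn nu <= 0 by lra.
  by rewrite pmulr_rle0.
move=> nu /= ->; split; first exact: mus.
move=> nu' hs'; apply: le_trans valmu _; apply: le_trans (lownu nu' hs').
by rewrite lerDl; apply: mulr_ge0; [exact: ltW | exact: Dge0].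
Qed.
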